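(* Let $H_0,H_1$ be complex Hilbert spaces, $G$ a densely defined closed operator from $H_0$ into $H_1$ and $D$ a densely defined closed operator from $H_1$ into $H_0$ with $-G^*\subset D$. Let $H$ be a Hilbert space and $\kappa\in\mathcal L(\mathrm{BD}(G),H)$ injective with dense range. Let $a\in\mathcal L(H_1)$ and $m\in\mathcal L(H_0)$ be coercive. Define $\mathfrak b\colon\mathrm{dom}(G)\times\mathrm{dom}(G)\to\mathbb C$ by $\mathfrak b(u,v)=(aGu,Gv)_{H_1}+(mu,v)_{H_0}$ and $j\colon\mathrm{dom}(G)\to H$ by $j=\kappa\circ\pi_{\mathrm{BD}(G)}$. Then $\mathfrak b$ is coercive and continuous on $\mathrm{dom}(G)$, and the Dirichlet-to-Neumann operator $\Lambda_H$ in $H$ associated with $-DaG+m$ equals the operator associated with $(\mathfrak b,j)$.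
   Context: $\mathring D=-G^*$, $\mathring G=-D^*$. Domains carry graph inner products. $\mathrm{BD}(G)$ (resp. $\mathrm{BD}(D)$) is the orthogonal complement of $\mathrm{dom}(\mathring G)$ in $\mathrm{dom}(G)$ (resp. of $\mathrm{dom}(\mathring D)$ in $\mathrm{dom}(D)$) with induced inner products; $\pi_{\mathrm{BD}(G)},\pi_{\mathrm{BD}(D)}$ are the orthogonal projections. $G$ maps $\mathrm{BD}(G)$ into $\mathrm{BD}(D)$. Coercive operator: $\mathrm{Re}(Mx,x)\ge\mu\|x\|^2$ for some $\mu>0$; a form $\mathfrak b$ on a Hilbert space $V$ is coercive if $\mathrm{Re}\,\mathfrak b(v,v)\ge\mu\|v\|_V^2$ for some $\mu>0$. For coercive $a,m$ and $u_0\in\mathrm{BD}(G)$ there is a unique $u\in\mathrm{dom}(G)$ with $aGu\in\mathrm{dom}(D)$, $mu-DaGu=0$, $u-u_0\in\mathrm{dom}(\mathring G)$; set $\Lambda u_0=\pi_{\mathrm{BD}(D)}(aGu)$. $\Lambda_H$: $\varphi\in\mathrm{dom}(\Lambda_H)$, $\Lambda_H\varphi=\psi$ iff there exists $u_0\in\mathrm{BD}(G)$ with $\kappa(u_0)=\varphi$ and $\Lambda u_0=G\kappa^*\psi$ ($\kappa^*\colon H\to\mathrm{BD}(G)$ the adjoint). The operator $A$ associated with $(\mathfrak b,j)$: for $x,f\in H$, $x\in\mathrm{dom}(A)$ and $Ax=f$ iff there exists $u\in\mathrm{dom}(G)$ with $j(u)=x$ and $\mathfrak b(u,v)=(f,j(v))_H$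 for all $v\in\mathrm{dom}(G)$. *)

(* Defs.v *)
From mathcomp Require Import all_boot all_algebra.
From mathcomp Require Import reals.
From mathcomp.real_closed Require Import complex.
From Stdlib Require Import ClassicalEpsilon.
Set Implicit Arguments. Unset Strict Implicit. Unset Printing Implicit Defensive.
Import GRing.Theory Num.Theory.
Local Open Scope ring_scope.

Section Hilbert.
Variable R : realType.
Notation C := (R[i]).

Record hilbert (V : lmodType C) := Hilbert {
  ip : V -> V -> C;
  ip_linl : forall (c : C) x y z, ip (c *: x + y) z = c * ip x z + ip y z;
  ip_sym : forall x y, ip y x = (ip x y)^*;
  ip_pos : forall x, x != 0 -> 0 < ip x x;
  ip_complete : forall u : nat -> V,
    (forall e : C, 0 < e -> exists N, forall n k, (N <= n)%N -> (N <= k)%N ->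
        sqrtC (ip (u n - u k) (u n - u k)) < e) ->
    exists l, forall e : C, 0 < e -> exists N, forall n, (N <= n)%N ->
        sqrtC (ip (u n - l) (u n - l)) < e }.

Definition hnorm (V : lmodType C) (h : hilbert V) (x : V) : C :=
  sqrtC (ip h x x).

Definition hconv (V : lmodType C) (h : hilbert V) (u : nat -> V) (l : V) :=
  forall e : C, 0 < e -> exists N, forall n, (N <= n)%N -> hnorm h (u n - l) < e.

Definition subspace (V : lmodType C) (P : V -> Prop) :=
  P 0 /\ forall (c : C) x y, P x -> P y -> P (c *: x + y).

Definition linear_on (V W : lmodType C) (P : V -> Prop) (f : V -> W) :=
  forall (c : C) x y, P x -> P y -> f (c *: x + y) = c *: f x + f y.

Definition dense (V : lmodType C) (h : hilbert V) (P : V -> Prop) :=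
  forall x (e : C), 0 < e -> exists y, P y /\ hnorm h (x - y) < e.

Definition densely_defined (V W : lmodType C) (hV : hilbert V)
    (dom : V -> Prop) (f : V -> W) :=
  subspace dom /\ linear_on dom f /\ dense hV dom.

Definition closed_op (V W : lmodType C) (hV : hilbert V) (hW : hilbert W)
    (dom : V -> Prop) (f : V -> W) :=
  forall (u : nat -> V) x y, (forall n, dom (u n)) ->
    hconv hV u x -> hconv hW (fun n => f (u n)) y -> dom x /\ f x = y.

Definition adj_graph (V W : lmodType C) (hV : hilbert V) (hW : hilbert W)
    (dom : V -> Prop) (f : V -> W) (y : W) (z : V) :=
  forall x, dom x -> ip hW (f x) y = ip hV x z.

Definition adj_dom (V W : lmodType C) (hV : hilbert V) (hW : hilbert W)
    (dom : V -> Prop) (f : V -> W) (y : W) :=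
  exists z, adj_graph hV hW dom f y z.

Definition minus_adj_sub (V W : lmodType C) (hV : hilbert V) (hW : hilbert W)
    (domG : V -> Prop) (G : V -> W) (domD : W -> Prop) (D : W -> V) :=
  forall y z, adj_graph hV hW domG G y z -> domD y /\ D y = - z.

Definition graph_ip (V W : lmodType C) (hV : hilbert V) (hW : hilbert W)
    (f : V -> W) (x y : V) : C :=
  ip hV x y + ip hW (f x) (f y).

Definition graph_norm (V W : lmodType C) (hV : hilbert V) (hW : hilbert W)
    (f : V -> W) (x : V) : C :=
  sqrtC (graph_ip hV hW f x x).

(* BD(f) : orthogonal complement of dom(fcirc) in dom(f) (graph inner product);
   here dom(fcirc) is passed as a predicate *)
Definition BD (V W : lmodType C) (hV : hilbert V) (hW : hilbert W)
    (dom : V -> Prop) (f : V -> W) (domcirc : V -> Prop) (u : V) :=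
  dom u /\ forall w, domcirc w -> graph_ip hV hW f u w = 0.

Definition is_BDproj (V W : lmodType C) (hV : hilbert V) (hW : hilbert W)
    (dom : V -> Prop) (f : V -> W) (domcirc : V -> Prop) (u p : V) :=
  BD hV hW dom f domcirc p /\
  forall b, BD hV hW dom f domcirc b -> graph_ip hV hW f (u - p) b = 0.

Definition BDproj (V W : lmodType C) (hV : hilbert V) (hW : hilbert W)
    (dom : V -> Prop) (f : V -> W) (domcirc : V -> Prop) (u : V) : V :=
  epsilon (inhabits 0) (is_BDproj hV hW dom f domcirc u).

Definition bounded_op (V W : lmodType C) (hV : hilbert V) (hW : hilbert W)
    (f : V -> W) :=
  exists c : C, forall x, hnorm hW (f x) <= c * hnorm hV x.

Definition coercive_op (V : lmodType C) (hV : hilbert V) (f : V -> V) :=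
  exists mu : C, 0 < mu /\ forall x, mu * hnorm hV x ^+ 2 <= 'Re (ip hV (f x) x).


Definition coercive_form (V W : lmodType C) (hV : hilbert V) (hW : hilbert W)
    (dom : V -> Prop) (f : V -> W) (b : V -> V -> C) :=
  exists mu : C, 0 < mu /\
    forall v, dom v -> mu * graph_norm hV hW f v ^+ 2 <= 'Re (b v v).

Definition continuous_form (V W : lmodType C) (hV : hilbert V) (hW : hilbert W)
    (dom : V -> Prop) (f : V -> W) (b : V -> V -> C) :=
  exists c : C, forall u v, dom u -> dom v ->
    `|b u v| <= c * graph_norm hV hW f u * graph_norm hV hW f v.

(* operator A in H associated with (b, j) on dom(G): A x = y *)
Definition assoc_op (V K : lmodType C) (hK : hilbert K) (dom : V -> Prop)
    (b : V -> V -> C) (j : V -> K) (x y : K) :=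
  exists u, dom u /\ j u = x /\ forall v, dom v -> b u v = ip hK y (j v).

End Hilbert.

Section DtN.
Variable R : realType.
Notation C := (R[i]).
Variables (H0 H1 H : lmodType C) (h0 : hilbert H0) (h1 : hilbert H1)
  (hH : hilbert H) (domG : H0 -> Prop) (G : H0 -> H1)
  (domD : H1 -> Prop) (D : H1 -> H0).

(* dom(Gcirc) = dom(-D^* ) = dom(D^* ),  dom(Dcirc) = dom(-G^* ) = dom(G^* ) *)
Definition domGcirc : H0 -> Prop := adj_dom h1 h0 domD D.
Definition domDcirc : H1 -> Prop := adj_dom h0 h1 domG G.
Definition BDG : H0 -> Prop := BD h0 h1 domG G domGcirc.
Definition BDD : H1 -> Prop := BD h1 h0 domD D domDcirc.
Definition piBDG : H0 -> H0 := BDproj h0 h1 domG G domGcirc.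
Definition piBDD : H1 -> H1 := BDproj h1 h0 domD D domDcirc.

Definition kappa_star (kappa : H0 -> H) (psi : H) : H0 :=
  epsilon (inhabits 0) (fun w => BDG w /\
    forall u, BDG u -> ip hH (kappa u) psi = graph_ip h0 h1 G u w).

(* Lambda u0 = g  (Lambda : BD(G) -> BD(D)) *)
Definition Lambda_rel (a : H1 -> H1) (m : H0 -> H0) (u0 : H0) (g : H1) :=
  exists u, domG u /\ domD (a (G u)) /\ m u - D (a (G u)) = 0 /\
    domGcirc (u - u0) /\ piBDD (a (G u)) = g.

Definition DtN_H (kappa : H0 -> H) (a : H1 -> H1) (m : H0 -> H0) (phi psi : H) :=
  exists u0, BDG u0 /\ kappa u0 = phi /\
    Lambda_rel a m u0 (G (kappa_star kappa psi)).

Definition form_b (a : H1 -> H1) (m : H0 -> H0) (u v : H0) : C :=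
  ip h1 (a (G u)) (G v) + ip h0 (m u) v.

Definition map_j (kappa : H0 -> H) (u : H0) : H := kappa (piBDG u).

End DtN.

(* Main.v *)
Require Import Defs.
From mathcomp Require Import all_boot all_order all_algebra.
From mathcomp Require Import classical_sets reals.
From mathcomp.real_closed Require Import complex.
From Stdlib Require Import ClassicalEpsilon.
From mathcomp Require Import ring lra.
Set Implicit Arguments. Unset Strict Implicit. Unset Printing Implicit Defensive.
Import Order.TTheory GRing.Theory Num.Theory.
Local Open Scope ring_scope.
Section Cplx.
Variable R : realType.
Local Notation C := R[i].
Local Notation cRe := (@complex.Re R).
Local Notation cIm := (@complex.Im R).

Lemma cext (x y : C) : cRe x = cRe y -> cIm x = cIm y -> x = y.
Proof. by case: x => a b; case: y => c d /= -> ->. Qed.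
Lemma ReD (x y : C) : cRe (x + y) = cRe x + cRe y. Proof. by case: x; case: y. Qed.
Lemma ImD (x y : C) : cIm (x + y) = cIm x + cIm y. Proof. by case: x; case: y. Qed.
Lemma ReN (x : C) : cRe (- x) = - cRe x. Proof. by case: x. Qed.
Lemma ImN (x : C) : cIm (- x) = - cIm x. Proof. by case: x. Qed.
Lemma ReB (x y : C) : cRe (x - y) = cRe x - cRe y. Proof. by rewrite ReD ReN. Qed.
Lemma ImB (x y : C) : cIm (x - y) = cIm x - cIm y. Proof. by rewrite ImD ImN. Qed.
Lemma ReMR (s : R) (z : C) : cRe (s%:C%C * z) = s * cRe z.
Proof. by case: z => a b /=; rewrite mul0r subr0. Qed.
Lemma ImMR (s : R) (z : C) : cIm (s%:C%C * z) = s * cIm z.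
Proof. by case: z => a b /=; rewrite mul0r addr0. Qed.
Lemma ReJ (z : C) : cRe (z^*) = cRe z. Proof. by case: z. Qed.
Lemma ImJ (z : C) : cIm (z^*) = - cIm z. Proof. by case: z. Qed.
Lemma ReR (s : R) : cRe (s%:C%C) = s. Proof. by []. Qed.
Lemma ImR (s : R) : cIm (s%:C%C) = 0. Proof. by []. Qed.
Definition iC : C := Complex 0 1.
Lemma Re_iC (z : C) : cRe (iC * z) = - cIm z.
Proof. by case: z => a b /=; rewrite mul0r mul1r sub0r. Qed.
Lemma Im_iC (z : C) : cIm (iC * z) = cRe z.
Proof. by case: z => a b /=; rewrite mul0r mul1r add0r. Qed.
Lemma iC_conj : iC * iC^* = 1.
Proof. by apply/eqP; rewrite eq_complex /= !mul0r !mul1r sub0r opprK add0r !eqxx. Qed.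
Lemma conjR (s : R) : (s%:C%C)^* = s%:C%C :> C.
Proof. exact: conjc_real. Qed.
Lemma cge0 (z : C) : 0 <= z -> z = (cRe z)%:C%C /\ 0 <= cRe z.
Proof.
case: z => a b; rewrite lecE /= => /andP[/eqP -> ha]; by split.
Qed.
Lemma cgt0 (z : C) : 0 < z -> z = (cRe z)%:C%C /\ 0 < cRe z.
Proof.
case: z => a b; rewrite ltcE /= => /andP[/eqP -> ha]; by split.
Qed.
Lemma leC_Re (x y : C) : x <= y -> cRe x <= cRe y.
Proof. by rewrite lecE => /andP[]. Qed.
Lemma RleC (a b : R) : (a%:C%C <= b%:C%C :> C) = (a <= b). Proof. exact: lecR. Qed.
Lemma RltC (a b : R) : (a%:C%C < b%:C%C :> C) = (a < b). Proof. exact: ltcR. Qed.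
Lemma sqrtC_R (r : R) : 0 <= r -> sqrtC (r%:C%C) = (Num.sqrt r)%:C%C.
Proof.
move=> hr; rewrite -{1}(sqr_sqrtr hr) rmorphXn /= sqrCK //.
by rewrite lecR sqrtr_ge0.
Qed.
Lemma ReRe (z : C) : 'Re z = (cRe z)%:C%C. Proof. by rewrite complexRe. Qed.
Lemma sq_le0 (a : R) : (forall e, 0 < e -> a ^+ 2 < e) -> a = 0.
Proof.
move=> H; apply/eqP; rewrite -sqrf_eq0; apply/eqP.
apply: le_anti; rewrite sqr_ge0 andbT.
apply/ler_addgt0Pr => e he; rewrite add0r; apply: ltW; exact: H.
Qed.
Lemma quad_disc (a b c : R) : 0 <= a -> 0 <= c ->
  (forall s, 0 <= a + 2 * s * b + s ^+ 2 * c) -> b ^+ 2 <= a * c.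
Proof.
move=> ha hc H; have [c0|cpos] := eqVneq c 0.
  subst c; have [b0|bn0] := eqVneq b 0; first by subst b; nra.
  have := H (- (a + 1) / (2 * b)).
  have -> : a + 2 * (- (a + 1) / (2 * b)) * b + (- (a + 1) / (2 * b)) ^+ 2 * 0 = -1.
    by field; rewrite bn0.
  lra.
have cp : 0 < c by rewrite lt_neqAle eq_sym cpos hc.
have := H (- b / c).
have -> : a + 2 * (- b / c) * b + (- b / c) ^+ 2 * c = (a * c - b ^+ 2) / c.
  by field; rewrite cpos.
rewrite ler_pdivlMr // mul0r; lra.
Qed.
Lemma quad_lin (a b : R) : 0 <= b -> (forall s, 0 <= s * a + s ^+ 2 * b) -> a = 0.
Proof.
move=> hb H; have : (a / 2) ^+ 2 <= 0 * b.
  apply: quad_disc => // s; have := H s; lra.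
move=> h; apply/eqP; rewrite -sqrf_eq0; apply/eqP; apply: le_anti.
rewrite sqr_ge0 andbT; nra.
Qed.
End Cplx.
Definition nfm (R : realType) (V : lmodType R[i]) (f : V -> V -> R[i]) (x : V) : R :=
  complex.Re (f x x).
Definition cauchyR (R : realType) (V : lmodType R[i]) (f : V -> V -> R[i]) (u : nat -> V) :=
  forall e : R, 0 < e -> exists N, forall n k, (N <= n)%N -> (N <= k)%N ->
    nfm f (u n - u k) < e.
Definition convR (R : realType) (V : lmodType R[i]) (f : V -> V -> R[i]) (u : nat -> V) l :=
  forall e : R, 0 < e -> exists N, forall n, (N <= n)%N -> nfm f (u n - l) < e.
Definition completeR (R : realType) (V : lmodType R[i]) (f : V -> V -> R[i]) (S : V -> Prop) :=
  forall u : nat -> V, (forall n, S (u n)) -> cauchyR f u ->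
    exists l, S l /\ convR f u l.

Definition epsn (R : realType) (n : nat) : R := (n.+1%:R)^-1.
Lemma epsn_gt0 (R : realType) n : 0 < epsn R n.
Proof. by rewrite /epsn invr_gt0 ltr0Sn. Qed.

Lemma eta_bound (R : realType) (c x y M : R) : 0 <= c -> 0 <= y -> 0 <= x -> x <= M ->
  c / (M + 1) * x <= c.
Proof.
move=> hc hy hx hxM; have hM : 0 < M + 1 by lra.
rewrite mulrAC ler_pdivrMr //; apply: ler_wpM2l => //; lra.
Qed.
Lemma sq_le (R : realType) (a b : R) : a ^+ 2 <= b ^+ 2 -> 0 <= b -> a <= b.
Proof. move=> h hb; rewrite leNgt; apply/negP => hab; nra. Qed.
Lemma sq_le' (R : realType) (a b : R) : a ^+ 2 <= b ^+ 2 -> 0 <= b -> - b <= a.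
Proof. move=> h hb; rewrite leNgt; apply/negP => hab; nra. Qed.

Section Form.
Variable R : realType.
Local Notation C := R[i].
Local Notation cRe := (@complex.Re R).
Local Notation cIm := (@complex.Im R).
Variable V : lmodType C.
Variable f : V -> V -> C.
Variable S : V -> Prop.
Hypothesis S0 : S 0.
Hypothesis SZD : forall (c : C) x y, S x -> S y -> S (c *: x + y).
Hypothesis flin : forall (c : C) x y z, S x -> S y -> S z ->
  f (c *: x + y) z = c * f x z + f y z.
Hypothesis fsym : forall x y, f y x = (f x y)^*.
Hypothesis fpos : forall x, 0 <= f x x.
Local Notation nf := (nfm f).

Lemma SD x y : S x -> S y -> S (x + y).
Proof. by move=> hx hy; have := SZD 1 hx hy; rewrite scale1r. Qed.
Lemma SZ (c : C) x : S x -> S (c *: x).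
Proof. by move=> hx; have := SZD c hx S0; rewrite addr0. Qed.
Lemma SN x : S x -> S (- x).
Proof. by move=> hx; rewrite -scaleN1r; apply: SZ. Qed.
Lemma SB x y : S x -> S y -> S (x - y).
Proof. by move=> hx hy; apply: SD => //; apply: SN. Qed.

Lemma f0l z : S z -> f 0 z = 0.
Proof.
move=> hz; have := flin 1 S0 S0 hz; rewrite scaler0 add0r mul1r => H.
by apply: (addrI (f 0 z)); rewrite addr0 -H.
Qed.
Lemma fDl x y z : S x -> S y -> S z -> f (x + y) z = f x z + f y z.
Proof. by move=> hx hy hz; have := flin 1 hx hy hz; rewrite scale1r mul1r. Qed.
Lemma fZl (c : C) x z : S x -> S z -> f (c *: x) z = c * f x z.
Proof. by move=> hx hz; have := flin c hx S0 hz; rewrite addr0 f0l // addr0. Qed.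
Lemma fNl x z : S x -> S z -> f (- x) z = - f x z.
Proof. by move=> hx hz; rewrite -scaleN1r fZl // mulN1r. Qed.
Lemma fBl x y z : S x -> S y -> S z -> f (x - y) z = f x z - f y z.
Proof. by move=> hx hy hz; rewrite fDl ?fNl //; apply: SN. Qed.
Lemma f0r z : S z -> f z 0 = 0.
Proof. by move=> hz; rewrite fsym f0l // conjC0. Qed.
Lemma fDr x y z : S x -> S y -> S z -> f z (x + y) = f z x + f z y.
Proof. by move=> hx hy hz; rewrite (fsym (x+y) z) (fsym x z) (fsym y z) fDl // rmorphD. Qed.
Lemma fZr (c : C) x z : S x -> S z -> f z (c *: x) = c^* * f z x.
Proof. by move=> hx hz; rewrite (fsym (c *: x) z) (fsym x z) fZl // rmorphM. Qed.
Lemma fNr x z : S x -> S z -> f z (- x) = - f z x.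
Proof. by move=> hx hz; rewrite (fsym (- x) z) (fsym x z) fNl // rmorphN. Qed.
Lemma fBr x y z : S x -> S y -> S z -> f z (x - y) = f z x - f z y.
Proof. by move=> hx hy hz; rewrite fDr ?fNr //; apply: SN. Qed.

Lemma nf_ge0 x : 0 <= nf x.
Proof. by have [_ ] := cge0 (fpos x). Qed.
Lemma fxx x : f x x = (nf x)%:C%C.
Proof. by have [] := cge0 (fpos x). Qed.
Lemma Re_sym x y : cRe (f y x) = cRe (f x y).
Proof. by rewrite fsym ReJ. Qed.
Lemma Im_sym x y : cIm (f y x) = - cIm (f x y).
Proof. by rewrite fsym ImJ. Qed.

Lemma nf_expand (s : R) y w : S y -> S w ->
  nf (s%:C%C *: y + w) = nf w + 2 * s * cRe (f y w) + s ^+ 2 * nf y.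
Proof.
move=> hy hw; have hyw := SZD s%:C%C hy hw; have hsy := SZ s%:C%C hy.
rewrite /nfm flin // !fDr // (fZr _ hy hy) (fZr _ hy hw) conjR (fsym y w) ?(ReD, ReMR, ReJ); ring.
Qed.

Lemma nf0 : nf 0 = 0.
Proof. by rewrite /nfm f0l. Qed.
Lemma nfZR (s : R) y : S y -> nf (s%:C%C *: y) = s ^+ 2 * nf y.
Proof.
move=> hy; have := nf_expand s hy S0; rewrite addr0 nf0 f0r // ReR; lra.
Qed.
Lemma nfN y : S y -> nf (- y) = nf y.
Proof.
move=> hy; rewrite -scaleN1r (_ : -1 = (-1)%:C%C) ?nfZR //; first by rewrite sqrrN expr1n mul1r.
by rewrite rmorphN rmorph1.
Qed.
Lemma nfB_sym x y : S x -> S y -> nf (x - y) = nf (y - x).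
Proof. by move=> hx hy; rewrite -(nfN (SB hx hy)) opprB. Qed.

Lemma CS_Re x y : S x -> S y -> (cRe (f x y)) ^+ 2 <= nf x * nf y.
Proof.
move=> hx hy; apply: quad_disc; rewrite ?nf_ge0 // => s.
by rewrite -Re_sym -nf_expand // nf_ge0.
Qed.

Lemma nf_iC x : S x -> nf ((iC R) *: x) = nf x.
Proof.
move=> hx; have hix := SZ (iC R) hx.
by rewrite /nfm (fZl _ hx hix) (fZr _ hx hx) mulrA iC_conj mul1r.
Qed.

Lemma CS_Im x y : S x -> S y -> (cIm (f x y)) ^+ 2 <= nf x * nf y.
Proof.
move=> hx hy; have := CS_Re (SZ (iC R) hx) hy.
by rewrite fZl // Re_iC sqrrN nf_iC.
Qed.

Lemma parallelogram x y : S x -> S y -> nf (x + y) + nf (x - y) = 2 * nf x + 2 * nf y.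
Proof.
move=> hx hy.
have e1 : x + y = (1%:C%C) *: y + x by rewrite rmorph1 scale1r addrC.
have e2 : x - y = ((-1)%:C%C) *: y + x by rewrite rmorphN rmorph1 scaleN1r addrC.
rewrite e1 e2 !nf_expand //; ring.
Qed.

Variable l : V -> C.
Hypothesis llin : forall (c : C) x y, S x -> S y -> l (c *: x + y) = c * l x + l y.
Variable K : R.
Hypothesis K0 : 0 <= K.
Hypothesis lbd : forall x, S x -> (cRe (l x)) ^+ 2 <= K * nf x.
Hypothesis Scomp : completeR f S.

Lemma l0 : l 0 = 0.
Proof.
have := llin 1 S0 S0; rewrite scaler0 add0r mul1r => H.
by apply: (addrI (l 0)); rewrite addr0 -H.
Qed.
Lemma lZ (c : C) x : S x -> l (c *: x) = c * l x.
Proof. by move=> hx; have := llin c hx S0; rewrite addr0 l0 addr0. Qed.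
Lemma lD x y : S x -> S y -> l (x + y) = l x + l y.
Proof. by move=> hx hy; have := llin 1 hx hy; rewrite scale1r mul1r. Qed.

Definition J x := nf x / 2 - cRe (l x).

Lemma J_expand (s : R) y w : S y -> S w ->
  J (s%:C%C *: y + w) = J w + s * (cRe (f y w) - cRe (l y)) + s ^+ 2 / 2 * nf y.
Proof.
move=> hy hw; rewrite /J nf_expand // llin // ?(ReD, ReMR); field; done.
Qed.

Lemma J_lb x : S x -> - K / 2 <= J x.
Proof.
move=> hx; rewrite /J; have := lbd hx; have := nf_ge0 x.
set q := nf x; set r := cRe (l x) => hq hr; clearbody q r.
suff : r <= (q + K) / 2 by lra.
have h1 : 4 * r ^+ 2 <= (q + K) ^+ 2.
  have := sqr_ge0 (q - K); nra.
rewrite leNgt; apply/negP => h2.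
have h3 : 0 <= (q + K) / 2 by apply: divr_ge0 => //; apply: addr_ge0.
have h4 : 0 < (r - (q + K) / 2) * (r + (q + K) / 2) by apply: mulr_gt0; lra.
nra.
Qed.

Lemma riesz : exists w, S w /\ forall x, S x -> l x = f x w.
Proof.
have K0' : 0 <= K := K0.
pose E : set R := fun r => exists x, S x /\ r = J x.
have hE : has_inf E.
  split; first by exists (J 0); exists 0.
  by exists (- K / 2) => r [x [hx ->]]; apply: J_lb.
pose d := inf E.
have Jd : forall x, S x -> d <= J x.
  move=> x hx; apply: (ge_inf hE.2); by exists x.
have ex n : exists x, S x /\ J x < d + epsn R n.
  have hp := epsn_gt0 R n.
  have [r [x [hx ->]] hr] := inf_adherent hp hE.
  by exists x.
pose u n := proj1_sig (constructive_indefinite_description _ (ex n)).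
have hu n : S (u n) /\ J (u n) < d + epsn R n.
  exact: (proj2_sig (constructive_indefinite_description _ (ex n))).
clearbody u d.
have small : forall e : R, 0 < e -> exists N, forall n, (N <= n)%N -> epsn R n < e.
  move=> e he; exists (Num.trunc (e^-1)) => n hn.
  rewrite /epsn -(invrK e) ltf_pV2 ?posrE ?invr_gt0 ?ltr0Sn //.
  apply: lt_le_trans (truncnS_gt _) _; by rewrite ler_nat ltnS.
have cau : cauchyR f u.
  move=> e he; have [N hN] := small (e / 8) (divr_gt0 he (ltr0Sn R 7)).
  exists N => n k hn hk.
  have [hxn Jn] := hu n; have [hxk Jk] := hu k.
  pose m := (2^-1 : R)%:C%C *: (u n + u k).
  have hm : S m by apply: SZ; apply: SD.
  have Jm := Jd m hm.
  have id : nf (u n - u k) = 4 * (J (u n) + J (u k) - 2 * J m).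
    have hs := SD hxn hxk.
    have e1 : nf m = (2^-1) ^+ 2 * nf (u n + u k) by rewrite /m nfZR.
    have e2 : cRe (l m) = 2^-1 * (cRe (l (u n)) + cRe (l (u k))).
      by rewrite /m lZ // ReMR lD // ReD.
    have e3 := parallelogram hxn hxk.
    rewrite /J e1 e2; move: e3; rewrite expr2; lra.
  clearbody m; have := hN n hn; have := hN k hk; lra.
have hu1 n : S (u n) by case: (hu n).
have [w [hw conv]] := Scomp hu1 cau.
have Jw : J w <= d.
  rewrite leNgt; apply/negP => hlt.
  have dpos : 0 < (J w - d) / 4 by lra.
  have etapos : 0 < ((J w - d) / 4) ^+ 2 / (nf w + K + 1).
    apply: divr_gt0; first exact: exprn_gt0.
    have := nf_ge0 w; lra.
  have [N1 hN1] := conv _ etapos.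
  have [N2 hN2] := small _ dpos.
  pose n := maxn N1 N2.
  have [hxn Jn] := hu n.
  have hh := SB hw hxn.
  have eu : u n = (-1)%:C%C *: (w - u n) + w.
    by rewrite rmorphN rmorph1 scaleN1r opprB subrK.
  have Jn' := J_expand (-1) hh hw; rewrite -eu in Jn'.
  have nh : nf (w - u n) < ((J w - d) / 4) ^+ 2 / (nf w + K + 1).
    by rewrite nfB_sym //; apply: hN1; rewrite leq_maxl.
  have en : epsn R n < (J w - d) / 4 by apply: hN2; rewrite leq_maxr.
  have c1 := CS_Re hh hw.
  have c2 := lbd hh.
  have hnw := nf_ge0 w.
  have hnh := nf_ge0 (w - u n).
  have b1 : (cRe (f (w - u n) w)) ^+ 2 <= ((J w - d) / 4) ^+ 2.
    apply: (le_trans c1); apply: (le_trans (y := ((J w - d) / 4) ^+ 2 / (nf w + K + 1) * nf w)).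
      by apply: ler_wpM2r => //; apply: ltW.
    apply: (eta_bound (y := 0)) => //; first exact: sqr_ge0.
    lra.
  have b2 : (cRe (l (w - u n))) ^+ 2 <= ((J w - d) / 4) ^+ 2.
    rewrite mulrC in c2; apply: (le_trans c2).
    apply: (le_trans (y := ((J w - d) / 4) ^+ 2 / (nf w + K + 1) * K)).
      by apply: ler_wpM2r => //; apply: ltW.
    apply: (eta_bound (y := 0)) => //; first exact: sqr_ge0.
    lra.
  have := sq_le b1 (ltW dpos); have := sq_le b2 (ltW dpos).
  have := sq_le' b2 (ltW dpos).
  move: Jn' Jn en; clearbody n; lra.
have var : forall y, S y -> cRe (f y w) = cRe (l y).
  move=> y hy; apply/eqP; rewrite -subr_eq0; apply/eqP.
  apply: (@quad_lin _ _ (nf y / 2)); first by have := nf_ge0 y; lra.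
  move=> s; have := Jd _ (SZD s%:C%C hy hw); rewrite J_expand //; lra.
exists w; split => // x hx; apply: cext.
  by rewrite var.
have hix := SZ (iC R) hx.
have := var _ hix; rewrite (fZl _ hx hw) lZ // !Re_iC => /eqP; rewrite eqr_opp => /eqP.
by move=> ->.
Qed.
End Form.
Section Hil.
Variable R : realType.
Local Notation C := R[i].
Local Notation cRe := (@complex.Re R).
Local Notation cIm := (@complex.Im R).

Lemma sqrt_lt_iff (a r : R) : 0 <= a -> 0 < r -> (Num.sqrt a < r) = (a < r ^+ 2).
Proof.
move=> ha hr; have hs := sqr_sqrtr ha; have hs0 := sqrtr_ge0 a.
apply/idP/idP => h.
  rewrite -hs; nra.
rewrite ltNge; apply/negP => h2; nra.
Qed.

Lemma sqrtC_lt (q : C) (r : R) : 0 <= q -> 0 < r -> (sqrtC q < r%:C%C) = (cRe q < r ^+ 2).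
Proof.
move=> hq hr; have [-> ha] := cge0 hq.
by rewrite sqrtC_R // ltcR sqrt_lt_iff.
Qed.

Lemma sqrtC_ltC (q e : C) : 0 <= q -> 0 < e -> (sqrtC q < e) = (cRe q < (cRe e) ^+ 2).
Proof.
move=> hq he; have [ee hr] := cgt0 he; rewrite {1}ee; exact: sqrtC_lt.
Qed.

Variable V : lmodType C.
Variable h : hilbert V.

Lemma h_lin (c : C) x y z : (fun _ => True) x -> (fun _ : V => True) y -> (fun _ : V => True) z ->
  ip h (c *: x + y) z = c * ip h x z + ip h y z.
Proof. by move=> *; rewrite ip_linl. Qed.
Lemma h_S0 : (fun _ : V => True) 0. Proof. by []. Qed.
Lemma h_SZD (c : C) (x y : V) : (fun _ : V => True) x -> (fun _ : V => True) y ->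
  (fun _ : V => True) (c *: x + y). Proof. by []. Qed.
Lemma h_pos x : 0 <= ip h x x.
Proof.
have [->|nx] := eqVneq x 0; last exact: ltW (ip_pos h nx).
by rewrite (f0l h_S0 h_lin) //.
Qed.
Lemma h_def x : ip h x x = 0 -> x = 0.
Proof.
move=> H; apply/eqP; apply/negPn/negP => hx.
by have := ip_pos h hx; rewrite H ltxx.
Qed.

Local Notation hnf := (nfm (ip h)).
Lemma hnf_ge0 x : 0 <= hnf x.
Proof. exact: (nf_ge0 h_pos). Qed.

Lemma hnorm_lt x (e : C) : 0 < e -> (hnorm h x < e) = (hnf x < (cRe e) ^+ 2).
Proof. move=> he; exact: sqrtC_ltC (h_pos x) he. Qed.

Lemma hconv_R (u : nat -> V) l : hconv h u l -> convR (ip h) u l.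
Proof.
move=> H e he; have hs : 0 < Num.sqrt e by rewrite sqrtr_gt0.
have hsC : 0 < (Num.sqrt e)%:C%C :> C by rewrite ltcR.
have [N hN] := H _ hsC; exists N => n hn.
by have := hN n hn; rewrite hnorm_lt // ReR sqr_sqrtr // ltW.
Qed.

Lemma R_hconv (u : nat -> V) l : convR (ip h) u l -> hconv h u l.
Proof.
move=> H e he; have [_ hr] := cgt0 he.
have [N hN] := H _ (exprn_gt0 2 hr); exists N => n hn.
by rewrite hnorm_lt //; apply: hN.
Qed.

Lemma R_hcauchy (u : nat -> V) : cauchyR (ip h) u ->
  forall e : C, 0 < e -> exists N, forall n k, (N <= n)%N -> (N <= k)%N ->
        sqrtC (ip h (u n - u k) (u n - u k)) < e.
Proof.
move=> H e he; have [_ hr] := cgt0 he.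
have [N hN] := H _ (exprn_gt0 2 hr); exists N => n k hn hk.
by have := hnorm_lt (u n - u k) he; rewrite /hnorm => ->; apply: hN.
Qed.

Lemma h_complete (u : nat -> V) : cauchyR (ip h) u -> exists l, convR (ip h) u l.
Proof.
move=> H; have [l hl] := ip_complete (R_hcauchy H).
by exists l; apply: hconv_R.
Qed.

Lemma hCS_Re x y : (cRe (ip h x y)) ^+ 2 <= hnf x * hnf y.
Proof. exact: (CS_Re h_S0 h_SZD h_lin (ip_sym h) h_pos). Qed.
Lemma hCS_Im x y : (cIm (ip h x y)) ^+ 2 <= hnf x * hnf y.
Proof. exact: (CS_Im h_S0 h_SZD h_lin (ip_sym h) h_pos). Qed.

Lemma hDl x y z : ip h (x + y) z = ip h x z + ip h y z.
Proof. exact: (fDl h_lin I I I). Qed.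
Lemma hDr x y z : ip h z (x + y) = ip h z x + ip h z y.
Proof. exact: (fDr h_lin (ip_sym h) I I I). Qed.
Lemma hBl x y z : ip h (x - y) z = ip h x z - ip h y z.
Proof. exact: (fBl h_S0 h_SZD h_lin I I I). Qed.
Lemma hBr x y z : ip h z (x - y) = ip h z x - ip h z y.
Proof. exact: (fBr h_S0 h_SZD h_lin (ip_sym h) I I I). Qed.
Lemma hNl x z : ip h (- x) z = - ip h x z.
Proof. exact: (fNl h_S0 h_lin I I). Qed.
Lemma hNr x z : ip h z (- x) = - ip h z x.
Proof. exact: (fNr h_S0 h_lin (ip_sym h) I I). Qed.
Lemma hZl (c : C) x z : ip h (c *: x) z = c * ip h x z.
Proof. exact: (fZl h_S0 h_lin c I I). Qed.
Lemma hZr (c : C) x z : ip h z (c *: x) = c^* * ip h z x.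
Proof. exact: (fZr h_S0 h_lin (ip_sym h) c I I). Qed.
Lemma h0l z : ip h 0 z = 0.
Proof. exact: (f0l h_S0 h_lin I). Qed.
Lemma h0r z : ip h z 0 = 0.
Proof. by rewrite ip_sym h0l conjC0. Qed.
Lemma hxx x : ip h x x = (hnf x)%:C%C.
Proof. exact: (fxx h_pos). Qed.
Lemma hnfB_sym x y : hnf (x - y) = hnf (y - x).
Proof. exact: (nfB_sym h_S0 h_SZD h_lin (ip_sym h) I I). Qed.
End Hil.
Lemma small_mul (R : realType) (a e M : R) : 0 <= a -> 0 <= M -> 0 < e -> a < e / (M + 1) -> a * M < e.
Proof.
move=> ha hM he hae; have hM1 : 0 < M + 1 by lra.
apply: (le_lt_trans (y := e / (M + 1) * M)); first by apply: ler_wpM2r => //; apply: ltW.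
rewrite mulrAC ltr_pdivrMr // ltr_pM2l //; lra.
Qed.

Section Op.
Variable R : realType.
Local Notation C := R[i].
Local Notation cRe := (@complex.Re R).
Local Notation cIm := (@complex.Im R).
Variables (V W : lmodType C) (hV : hilbert V) (hW : hilbert W).
Variables (dom : V -> Prop) (T : V -> W).
Hypothesis Tsub : subspace dom.
Hypothesis Tlin : linear_on dom T.
Hypothesis Tcl : closed_op hV hW dom T.

Lemma dom0 : dom 0. Proof. by case: Tsub. Qed.
Lemma domZD (c : C) x y : dom x -> dom y -> dom (c *: x + y).
Proof. by case: Tsub => _; apply. Qed.
Lemma domD x y : dom x -> dom y -> dom (x + y).
Proof. exact: (SD domZD). Qed.
Lemma domN x : dom x -> dom (- x).
Proof. exact: (SN dom0 domZD). Qed.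
Lemma domB x y : dom x -> dom y -> dom (x - y).
Proof. exact: (SB dom0 domZD). Qed.
Lemma domZ (c : C) x : dom x -> dom (c *: x).
Proof. exact: (SZ dom0 domZD). Qed.

Lemma T0 : T 0 = 0.
Proof.
have := Tlin 1 dom0 dom0; rewrite scaler0 add0r scale1r => H.
by apply: (addrI (T 0)); rewrite addr0 -H.
Qed.
Lemma TD x y : dom x -> dom y -> T (x + y) = T x + T y.
Proof. by move=> hx hy; have := Tlin 1 hx hy; rewrite !scale1r. Qed.
Lemma TZ (c : C) x : dom x -> T (c *: x) = c *: T x.
Proof. by move=> hx; have := Tlin c hx dom0; rewrite !addr0 T0 addr0. Qed.
Lemma TN x : dom x -> T (- x) = - T x.
Proof. by move=> hx; rewrite -scaleN1r TZ // scaleN1r. Qed.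
Lemma TB x y : dom x -> dom y -> T (x - y) = T x - T y.
Proof. by move=> hx hy; rewrite TD ?TN //; apply: domN. Qed.

Local Notation gf := (graph_ip hV hW T).

Lemma gf_lin' (c : C) x y z : dom x -> dom y -> gf (c *: x + y) z = c * gf x z + gf y z.
Proof. by move=> hx hy; rewrite /graph_ip Tlin // !ip_linl; ring. Qed.
Lemma gf_lin (c : C) x y z : dom x -> dom y -> dom z -> gf (c *: x + y) z = c * gf x z + gf y z.
Proof. by move=> hx hy _; apply: gf_lin'. Qed.
Lemma gf_sym x y : gf y x = (gf x y)^*.
Proof. by rewrite /graph_ip (ip_sym hV x y) (ip_sym hW (T x) (T y)) rmorphD. Qed.
Lemma gf_pos x : 0 <= gf x x.
Proof. by apply: addr_ge0; apply: h_pos. Qed.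
Lemma gf_nf x : nfm gf x = nfm (ip hV) x + nfm (ip hW) (T x).
Proof. by rewrite /nfm /graph_ip ReD. Qed.
Lemma gf0l z : gf 0 z = 0.
Proof. by rewrite /graph_ip T0 !h0l addr0. Qed.
Lemma gfBl x y z : dom x -> dom y -> gf (x - y) z = gf x z - gf y z.
Proof.
move=> hx hy; rewrite -scaleN1r addrC gf_lin' //; ring.
Qed.
Lemma gfBr x y z : dom x -> dom y -> gf z (x - y) = gf z x - gf z y.
Proof.
by move=> hx hy; rewrite (gf_sym (x - y) z) (gf_sym x z) (gf_sym y z) gfBl // rmorphB.
Qed.
Lemma gf_eq0 x : gf x x = 0 -> x = 0.
Proof.
move=> H; apply: (@h_def _ _ hV); apply/eqP.
by move: H => /eqP; rewrite /graph_ip paddr_eq0 ?h_pos // => /andP[].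
Qed.
Lemma gf_nfB x y : dom x -> dom y -> nfm gf (x - y) = nfm gf (y - x).
Proof. exact: (nfB_sym dom0 domZD gf_lin gf_sym). Qed.
Lemma gf_nf_ge0 x : 0 <= nfm gf x.
Proof. exact: (nf_ge0 gf_pos). Qed.

Lemma complete_dom : completeR gf dom.
Proof.
move=> u hu cau.
have cauV : cauchyR (ip hV) u.
  move=> e he; have [N hN] := cau e he; exists N => n k hn hk.
  have := hN n k hn hk; rewrite gf_nf; have := hnf_ge0 hW (T (u n - u k)); lra.
have cauW : cauchyR (ip hW) (fun n => T (u n)).
  move=> e he; have [N hN] := cau e he; exists N => n k hn hk.
  have := hN n k hn hk; rewrite gf_nf -TB //; have := hnf_ge0 hV (u n - u k); lra.
have [lV hlV] := h_complete cauV.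
have [lW hlW] := h_complete cauW.
have [dl Tl] := Tcl hu (R_hconv hlV) (R_hconv hlW).
exists lV; split => // e he.
have he2 : 0 < e / 2 by lra.
have [N1 h1] := hlV _ he2; have [N2 h2] := hlW _ he2.
exists (maxn N1 N2) => n hn.
rewrite gf_nf TB // Tl.
have := h1 n (leq_trans (leq_maxl _ _) hn); have := h2 n (leq_trans (leq_maxr _ _) hn).
lra.
Qed.

Lemma adj_adj y z : (forall a b, adj_graph hV hW dom T a b -> ip hV b y = ip hW a z) ->
  dom y /\ T y = z.
Proof.
move=> H.
pose l x := ip hV x y + ip hW (T x) z.
have llin : forall (c : C) x x', dom x -> dom x' -> l (c *: x + x') = c * l x + l x'.
  by move=> c x x' hx hx'; rewrite /l Tlin // !ip_linl; ring.
have K0 : 0 <= 2 * (nfm (ip hV) y + nfm (ip hW) z).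
  by have := hnf_ge0 hV y; have := hnf_ge0 hW z; lra.
have lbd : forall x, dom x -> (cRe (l x)) ^+ 2 <= 2 * (nfm (ip hV) y + nfm (ip hW) z) * nfm gf x.
  move=> x hx; rewrite /l ReD gf_nf.
  have c1 := hCS_Re hV x y; have c2 := hCS_Re hW (T x) z.
  have := hnf_ge0 hV y; have := hnf_ge0 hW z; have := hnf_ge0 hV x; have := hnf_ge0 hW (T x).
  move: c1 c2; set a := cRe _; set b := cRe _; set p := nfm _ x; set q := nfm _ (T x).
  set r := nfm _ y; set s := nfm _ z => c1 c2 h1 h2 h3 h4.
  have := sqr_ge0 (a - b); nra.
have [p [hp Hp]] := riesz dom0 domZD gf_lin gf_sym gf_pos llin K0 lbd complete_dom.
have adj : adj_graph hV hW dom T (z - T p) (p - y).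
  move=> x hx; have := Hp x hx; rewrite /l /graph_ip !hBr => E.
  rewrite -[ip hW (T x) z](addKr (ip hV x y)) E; ring.
have H1 := H _ _ adj.
have H2 := adj p hp.
have H1c : ip hV y (p - y) = ip hW z (z - T p).
  by rewrite (ip_sym hV (p - y) y) H1 -(ip_sym hW (z - T p) z).
rewrite !hBr in H1c H2.
have e1 : ip hW z z = ip hV y p - ip hV y y + ip hW z (T p) by rewrite H1c subrK.
have e2 : ip hV p p = ip hW (T p) z - ip hW (T p) (T p) + ip hV p y by rewrite H2 subrK.
have E : ip hV (y - p) (y - p) + ip hW (z - T p) (z - T p) = 0.
  rewrite !hBr !hBl e1 e2; ring.
move: E => /eqP; rewrite paddr_eq0 ?h_pos // => /andP[/eqP E1 /eqP E2].
have ey : y = p by apply/eqP; rewrite -subr_eq0; apply/eqP; apply: (@h_def _ _ hV).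
have ez : z = T p by apply/eqP; rewrite -subr_eq0; apply/eqP; apply: (@h_def _ _ hW).
by rewrite ey ez.
Qed.

Variable domcirc : V -> Prop.
Local Notation BDs := (BD hV hW dom T domcirc).

Lemma BD0 : BDs 0.
Proof. by split; [exact: dom0 | move=> w _; exact: gf0l]. Qed.
Lemma BDZD (c : C) x y : BDs x -> BDs y -> BDs (c *: x + y).
Proof.
move=> [hx Hx] [hy Hy]; split; first exact: domZD.
by move=> w hw; rewrite gf_lin' // Hx // Hy // mulr0 addr0.
Qed.
Lemma BD_dom x : BDs x -> dom x. Proof. by case. Qed.

Hypothesis circ_dom : forall w, domcirc w -> dom w.

Lemma BD_complete : completeR gf BDs.
Proof.
move=> u hu cau.
have [l [dl conv]] := complete_dom (fun n => BD_dom (hu n)) cau.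
exists l; split => //; split => // w hw.
have dw := circ_dom hw.
have key : forall n, gf l w = gf (l - u n) w.
  by move=> n; have [dn Hn] := hu n; rewrite gfBl // Hn // subr0.
have hM := gf_nf_ge0 w.
have small : forall e : R, 0 < e -> exists n, nfm gf (l - u n) * nfm gf w < e.
  move=> e he; have he' : 0 < e / (nfm gf w + 1) by apply: divr_gt0 => //; lra.
  have [N hN] := conv _ he'; exists N.
  apply: small_mul => //; first exact: gf_nf_ge0.
  rewrite (gf_nfB dl (BD_dom (hu N))); exact: (hN N (leqnn N)).
apply: cext.
  rewrite [RHS]/= ; apply: sq_le0 => e he.
  have [n hn] := small e he; rewrite (key n).
  apply: le_lt_trans hn; apply: (CS_Re dom0 domZD gf_lin gf_sym gf_pos) => //.
  by apply: domB => //; apply: BD_dom.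
rewrite [RHS]/= ; apply: sq_le0 => e he.
have [n hn] := small e he; rewrite (key n).
apply: le_lt_trans hn; apply: (CS_Im dom0 domZD gf_lin gf_sym gf_pos) => //.
by apply: domB => //; apply: BD_dom.
Qed.

Lemma proj_exists u : dom u -> is_BDproj hV hW dom T domcirc u (BDproj hV hW dom T domcirc u).
Proof.
move=> du; apply: epsilon_spec.
have llin : forall (c : C) x x', BDs x -> BDs x' -> gf (c *: x + x') u = c * gf x u + gf x' u.
  by move=> c x x' hx hx'; apply: gf_lin'; apply: BD_dom.
have flin : forall (c : C) x y z, BDs x -> BDs y -> BDs z -> gf (c *: x + y) z = c * gf x z + gf y z.
  by move=> c x y z hx hy _; apply: gf_lin'; apply: BD_dom.
have lbd : forall x, BDs x -> (cRe (gf x u)) ^+ 2 <= nfm gf u * nfm gf x.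
  move=> x hx; rewrite mulrC; apply: (CS_Re dom0 domZD gf_lin gf_sym gf_pos) => //.
  exact: BD_dom.
have [p [hp Hp]] := riesz BD0 BDZD flin gf_sym gf_pos llin (gf_nf_ge0 u) lbd BD_complete.
exists p; split => // b hb.
have dp := BD_dom hp.
by rewrite gfBl // (gf_sym b u) (gf_sym b p) Hp // subrr.
Qed.

Lemma proj_unique u p : dom u -> is_BDproj hV hW dom T domcirc u p ->
  BDproj hV hW dom T domcirc u = p.
Proof.
move=> du [hp Hp]; have [hp' Hp'] := proj_exists du.
set p' := BDproj _ _ _ _ _ u in hp' Hp' *.
have hb : BDs (p' - p) by rewrite -scaleN1r addrC; apply: BDZD.
have E : gf (p' - p) (p' - p) = 0.
  have eq1 : (u - p) - (u - p') = p' - p by rewrite opprB addrC addrA subrK.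
  have d1 : dom (u - p) by apply: domB => //; apply: BD_dom.
  have d2 : dom (u - p') by apply: domB => //; apply: BD_dom.
  by rewrite -{1}eq1 gfBl // Hp // Hp' // subrr.
have := gf_eq0 E; move/eqP; rewrite subr_eq0 => /eqP //.
Qed.
End Op.
Lemma bound_conv (R : realType) (p q c : R[i]) : 0 <= p -> 0 <= q ->
  sqrtC p <= c * sqrtC q -> complex.Re p <= (complex.Re c) ^+ 2 * complex.Re q.
Proof.
move=> hp hq; have [ep hp0] := cge0 hp; have [eq hq0] := cge0 hq.
rewrite {1}ep {1}eq !sqrtC_R // => /leC_Re; rewrite mulrC ReMR ReR.
have s1 := sqr_sqrtr hp0; have s2 := sqr_sqrtr hq0.
have t1 := sqrtr_ge0 (complex.Re p); have t2 := sqrtr_ge0 (complex.Re q).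
move: s1 s2 t1 t2; set a := complex.Re p; set b := complex.Re q; set r := complex.Re c.
set sa := Num.sqrt a; set sb := Num.sqrt b => s1 s2 t1 t2 H.
have : sa ^+ 2 <= (sb * r) ^+ 2.
  rewrite ler_pXn2r // ?nnegrE //; exact: le_trans H.
rewrite s1 exprMn s2; lra.
Qed.

Section Main.
Variable R : realType.
Local Notation C := R[i].
Local Notation cRe := (@complex.Re R).
Local Notation cIm := (@complex.Im R).
Variables (H0 H1 : lmodType C) (h0 : hilbert H0) (h1 : hilbert H1).
Variables (domG : H0 -> Prop) (G : H0 -> H1) (domD : H1 -> Prop) (D : H1 -> H0).
Hypothesis Gsub : subspace domG.
Hypothesis Glin : linear_on domG G.
Hypothesis Gcl : closed_op h0 h1 domG G.
Hypothesis Dsub : subspace domD.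
Hypothesis Dlin : linear_on domD D.
Hypothesis Dcl : closed_op h1 h0 domD D.
Hypothesis GD : minus_adj_sub h0 h1 domG G domD D.

Local Notation gfG := (graph_ip h0 h1 G).
Local Notation gfD := (graph_ip h1 h0 D).
Local Notation circG := (domGcirc h0 h1 domD D).
Local Notation circD := (domDcirc h0 h1 domG G).
Local Notation BDGs := (BDG h0 h1 domG G domD D).
Local Notation BDDs := (BDD h0 h1 domG G domD D).

Lemma L1 x z : adj_graph h1 h0 domD D x z -> domG x /\ G x = - z.
Proof.
move=> Hx; apply: (adj_adj Gsub Glin Gcl) => a b Hab.
have [da Da] := GD Hab.
have := Hx a da; rewrite Da hNl hNr => E.
by rewrite -[LHS]opprK E.
Qed.

Lemma circG_dom x : circG x -> domG x.
Proof. by case=> z /L1 []. Qed.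
Lemma circD_dom y : circD y -> domD y.
Proof. by case=> z /GD []. Qed.

Lemma L2 k : BDGs k -> [/\ domD (G k), D (G k) = k & BDDs (G k)].
Proof.
move=> [dk Hk].
have [dGk DGk] : domD (G k) /\ D (G k) = k.
  apply: (adj_adj Dsub Dlin Dcl) => x b Hxb.
  have [dx Gx] := L1 Hxb.
  have := Hk x (ex_intro _ b Hxb); rewrite /graph_ip Gx hNr => /eqP.
  rewrite subr_eq0 => /eqP E.
  by rewrite (ip_sym h1 (G k) b) -E -ip_sym.
split => //; split => // y [zy Hy].
have [dy Dy] := GD Hy.
by rewrite /graph_ip DGk Dy hNr Hy // subrr.
Qed.

Lemma L3 c : BDDs c -> [/\ domG (D c), G (D c) = c & BDGs (D c)].
Proof.
move=> [dc Hc].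
have [dDc GDc] : domG (D c) /\ G (D c) = c.
  apply: (adj_adj Gsub Glin Gcl) => y b Hyb.
  have [dy Dy] := GD Hyb.
  have := Hc y (ex_intro _ b Hyb); rewrite /graph_ip Dy hNr => /eqP.
  rewrite subr_eq0 => /eqP E.
  by rewrite (ip_sym h0 (D c) b) -E -ip_sym.
split => //; split => // x [zx Hx].
have [dx Gx] := L1 Hx.
by rewrite /graph_ip GDc Gx hNr Hx // subrr.
Qed.

Lemma circG0 : circG 0.
Proof. by exists 0 => y _; rewrite !h0r. Qed.
Lemma circGZD (c : C) x y : circG x -> circG y -> circG (c *: x + y).
Proof.
move=> [zx Hx] [zy Hy]; exists (c *: zx + zy) => w dw.
by rewrite hDr hZr Hx // Hy // hDr hZr.
Qed.

Lemma circG_complete : completeR gfG circG.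
Proof.
move=> u hu cau.
have [l [dl conv]] := complete_dom Gsub Glin Gcl (fun n => circG_dom (hu n)) cau.
exists l; split => //; exists (- G l) => w dw.
apply/eqP; rewrite -subr_eq0; apply/eqP.
have key : forall n, ip h0 (D w) l - ip h1 w (- G l) =
    ip h0 (D w) (l - u n) + - ip h1 w (G (u n - l)).
  move=> n; have [zn Hn] := hu n; have [dn Gn] := L1 Hn.
  rewrite (TB Gsub Glin dn dl) Gn !hBr !hNr (Hn w dw); ring.
have hM : 0 <= nfm (ip h0) (D w) + nfm (ip h1) w.
  by have := hnf_ge0 h0 (D w); have := hnf_ge0 h1 w; lra.
have small : forall e : R, 0 < e -> exists n,
    (nfm (ip h0) (D w) + nfm (ip h1) w) * nfm gfG (u n - l) < e.
  move=> e he; have he' : 0 < e / ((nfm (ip h0) (D w) + nfm (ip h1) w) + 1).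
    by apply: divr_gt0 => //; lra.
  have [N hN] := conv _ he'; exists N; rewrite mulrC.
  apply: small_mul => //; first exact: gf_nf_ge0.
  exact: (hN N (leqnn N)).
have dn n : domG (u n) := circG_dom (hu n).
apply: cext => /=; apply: sq_le0 => e he; have [n hn] := small _ (divr_gt0 he (ltr0Sn R 1)).
  rewrite (key n) ReD ReN.
  have c1 := hCS_Re h0 (D w) (l - u n); have c2 := hCS_Re h1 w (G (u n - l)).
  move: hn; rewrite gf_nf hnfB_sym.
  have := hnf_ge0 h0 (D w); have := hnf_ge0 h1 w; have := hnf_ge0 h0 (u n - l);
  have := hnf_ge0 h1 (G (u n - l)).
  move: c1 c2; rewrite hnfB_sym.
  set a := cRe _; set b := cRe _; set p := nfm _ (D w); set q := nfm _ w.
  set r := nfm _ (u n - l); set t := nfm _ (G _) => c1 c2 g1 g2 g3 g4 hn.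
  have := sqr_ge0 (a + b); nra.
rewrite (key n) ImD ImN.
have c1 := hCS_Im h0 (D w) (l - u n); have c2 := hCS_Im h1 w (G (u n - l)).
move: hn; rewrite gf_nf hnfB_sym.
have := hnf_ge0 h0 (D w); have := hnf_ge0 h1 w; have := hnf_ge0 h0 (u n - l);
have := hnf_ge0 h1 (G (u n - l)).
move: c1 c2; rewrite hnfB_sym.
set a := cIm _; set b := cIm _; set p := nfm _ (D w); set q := nfm _ w.
set r := nfm _ (u n - l); set t := nfm _ (G _) => c1 c2 g1 g2 g3 g4 hn.
have := sqr_ge0 (a + b); nra.
Qed.

Lemma L4 v : domG v -> exists p, circG p /\ BDGs (v - p).
Proof.
move=> dv.
have flin : forall (c : C) x y z, circG x -> circG y -> circG z ->
    gfG (c *: x + y) z = c * gfG x z + gfG y z.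
  by move=> c x y z hx hy _; apply: (gf_lin' h0 h1 Glin); apply: circG_dom.
have llin : forall (c : C) x y, circG x -> circG y -> gfG (c *: x + y) v = c * gfG x v + gfG y v.
  by move=> c x y hx hy; apply: (gf_lin' h0 h1 Glin); apply: circG_dom.
have lbd : forall x, circG x -> (cRe (gfG x v)) ^+ 2 <= nfm gfG v * nfm gfG x.
  move=> x hx; rewrite mulrC.
  apply: (CS_Re (dom0 Gsub) (domZD Gsub) (gf_lin h0 h1 Glin) (gf_sym h0 h1 G) (gf_pos h0 h1 G)) => //.
  exact: circG_dom.
have [p [hp Hp]] := riesz circG0 circGZD flin (gf_sym h0 h1 G) (gf_pos h0 h1 G) llin
  (gf_nf_ge0 h0 h1 G v) lbd circG_complete.
exists p; split => //; split; first by apply: (domB Gsub) => //; apply: circG_dom.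
move=> w hw; have dp := circG_dom hp.
by rewrite (gfBl h0 h1 Glin w dv dp) (gf_sym h0 h1 G w v) (gf_sym h0 h1 G w p) Hp // subrr.
Qed.

Lemma circG_BD : forall w, circG w -> domG w. Proof. exact: circG_dom. Qed.

Lemma piBDG_spec u : domG u -> is_BDproj h0 h1 domG G circG u (piBDG h0 h1 domG G domD D u).
Proof. move=> du; exact: (proj_exists Gsub Glin Gcl circG_dom du). Qed.

Lemma piBDG_eq u p : domG u -> is_BDproj h0 h1 domG G circG u p -> piBDG h0 h1 domG G domD D u = p.
Proof. move=> du hp; exact: (proj_unique Gsub Glin Gcl circG_dom du hp). Qed.

Lemma piBDD_spec u : domD u -> is_BDproj h1 h0 domD D circD u (piBDD h0 h1 domG G domD D u).
Proof. move=> du; exact: (proj_exists Dsub Dlin Dcl circD_dom du). Qed.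

Lemma piBDD_eq u p : domD u -> is_BDproj h1 h0 domD D circD u p -> piBDD h0 h1 domG G domD D u = p.
Proof. move=> du hp; exact: (proj_unique Dsub Dlin Dcl circD_dom du hp). Qed.

Lemma piBDG_decomp v p : domG v -> circG p -> BDGs (v - p) ->
  piBDG h0 h1 domG G domD D v = v - p.
Proof.
move=> dv hp hb; apply: piBDG_eq => //; split => // b [db Hb].
have -> : v - (v - p) = p by rewrite opprB addrC subrK.
by rewrite (gf_sym h0 h1 G b p) Hb // conjC0.
Qed.

Lemma piBDG_BD b : BDGs b -> piBDG h0 h1 domG G domD D b = b.
Proof.
move=> hb; apply: piBDG_eq; first by case: hb.
split => // b' hb'; by rewrite subrr (gf0l h0 h1 Gsub Glin).
Qed.

Variables (H : lmodType C) (hH : hilbert H) (kappa : H0 -> H).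
Hypothesis klin : linear_on BDGs kappa.
Hypothesis kbdd : exists c : C, forall u, BDGs u ->
      hnorm hH (kappa u) <= c * graph_norm h0 h1 G u.

Lemma kappa0 : kappa 0 = 0.
Proof.
have B0 : BDGs 0 := BD0 h0 h1 Gsub Glin circG.
have := klin 1 B0 B0; rewrite scaler0 add0r scale1r => E.
by apply: (addrI (kappa 0)); rewrite addr0 -E.
Qed.

Lemma ks_spec psi : BDGs (kappa_star h0 h1 hH domG G domD D kappa psi) /\
  forall u, BDGs u -> ip hH (kappa u) psi = gfG u (kappa_star h0 h1 hH domG G domD D kappa psi).
Proof.
rewrite /kappa_star; apply: (epsilon_spec (inhabits 0) (fun w => BDGs w /\ forall u, BDGs u -> ip hH (kappa u) psi = gfG u w)); have [c hc] := kbdd.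
have flin : forall (c : C) x y z, BDGs x -> BDGs y -> BDGs z ->
    gfG (c *: x + y) z = c * gfG x z + gfG y z.
  by move=> c' x y z [dx _] [dy _] _; apply: (gf_lin' h0 h1 Glin).
have llin : forall (c : C) x y, BDGs x -> BDGs y ->
    ip hH (kappa (c *: x + y)) psi = c * ip hH (kappa x) psi + ip hH (kappa y) psi.
  by move=> c' x y hx hy; rewrite klin // ip_linl.
have K0 : 0 <= (cRe c) ^+ 2 * nfm (ip hH) psi.
  by apply: mulr_ge0; [exact: sqr_ge0 | exact: hnf_ge0].
have lbd : forall x, BDGs x -> (cRe (ip hH (kappa x) psi)) ^+ 2 <=
    (cRe c) ^+ 2 * nfm (ip hH) psi * nfm gfG x.
  move=> x hx; have c1 := hCS_Re hH (kappa x) psi.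
  have c2 := bound_conv (h_pos hH (kappa x)) (gf_pos h0 h1 G x) (hc x hx).
  have := hnf_ge0 hH psi; have := hnf_ge0 hH (kappa x); have := gf_nf_ge0 h0 h1 G x.
  move: c1 c2; rewrite /nfm; set A := cRe (ip hH (kappa x) psi).
  set p := cRe (ip hH (kappa x) (kappa x)); set q := cRe (gfG x x); set r := cRe (ip hH psi psi).
  move=> c1 c2 g1 g2 g3.
  apply: (le_trans c1); rewrite mulrAC; apply: ler_wpM2r => //.
have [w [hw Hw]] := riesz (BD0 h0 h1 Gsub Glin circG) (@BDZD _ _ _ h0 h1 _ _ Gsub Glin circG)
  flin (gf_sym h0 h1 G) (gf_pos h0 h1 G) llin K0 lbd (BD_complete Gsub Glin Gcl circG_dom).
by exists w.
Qed.

Local Notation ks := (kappa_star h0 h1 hH domG G domD D kappa).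

Lemma fwd (a : H1 -> H1) (m : H0 -> H0) phi psi :
  DtN_H h0 h1 hH domG G domD D kappa a m phi psi ->
  assoc_op hH domG (form_b h0 h1 G a m) (map_j h0 h1 domG G domD D kappa) phi psi.
Proof.
case=> u0 [hu0 [ku0 [u [du [dw [eqm [circ pd]]]]]]].
have [hk Hk] := ks_spec psi.
have [dGk DGk BDGk] := L2 hk.
have du0 : domG u0 by case: hu0.
exists u; split => //; split.
  rewrite /map_j (@piBDG_eq u u0) //; split => // b [db Hb].
  by rewrite (gf_sym h0 h1 G b (u - u0)) Hb // conjC0.
move=> v dv.
have [p [hp hvp]] := L4 dv.
rewrite /map_j (piBDG_decomp dv hp hvp).
have [dGvb DGvb BDDGvb] := L2 hvp.
have [_ Hproj] := piBDD_spec dw; rewrite pd in Hproj.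
have E := Hproj _ BDDGvb.
have emu : m u = D (a (G u)) by apply/eqP; rewrite -subr_eq0 eqm.
have [zp Hzp] := hp; have [dp Gp] := L1 Hzp.
have dvb : domG (v - p) by case: hvp.
have ev : v = (v - p) + p by rewrite subrK.
rewrite (ip_sym hH (kappa (v - p)) psi) (Hk _ hvp) -(gf_sym h0 h1 G (v - p) (ks psi)).
rewrite /graph_ip in E *.
rewrite (TB Dsub Dlin dw dGk) DGk DGvb in E.
rewrite /form_b emu {1 2}ev (TD Glin dvb dp) Gp hDr hDr (Hzp _ dw).
rewrite hNr; apply/eqP; rewrite -subr_eq0 -[X in _ == X]E !hBl; apply/eqP; ring.
Qed.

Lemma bwd (a : H1 -> H1) (m : H0 -> H0) phi psi :
  assoc_op hH domG (form_b h0 h1 G a m) (map_j h0 h1 domG G domD D kappa) phi psi ->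
  DtN_H h0 h1 hH domG G domD D kappa a m phi psi.
Proof.
case=> u [du [ju hb]].
have [hu0 Hu0] := piBDG_spec du.
exists (piBDG h0 h1 domG G domD D u); split => //; split => //.
have [hk Hk] := ks_spec psi.
have [dGk DGk BDGk] := L2 hk.
have [dw Dw] : domD (a (G u)) /\ D (a (G u)) = m u.
  apply: (adj_adj Dsub Dlin Dcl) => x b Hxb.
  have [dx Gx] := L1 Hxb.
  have cx : circG x := ex_intro _ b Hxb.
  have px : piBDG h0 h1 domG G domD D x = 0.
    apply: piBDG_eq => //; split; first exact: (BD0 h0 h1 Gsub Glin circG).
    by move=> b' [db' Hb']; rewrite subr0 (gf_sym h0 h1 G b' x) Hb' // conjC0.
  have := hb x dx; rewrite /map_j px kappa0 h0r /form_b Gx hNr => /eqP.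
  rewrite addrC subr_eq0 => /eqP E.
  by rewrite (ip_sym h1 (a (G u)) b) -E -ip_sym.
exists u; split => //; split => //; split; first by rewrite Dw subrr.
split.
  have [p [hp hvp]] := L4 du.
  by rewrite (piBDG_decomp du hp hvp) opprB addrC subrK.
apply: piBDD_eq => //; split => // c hc.
have [dDc GDc BDGDc] := L3 hc.
have := hb _ dDc; rewrite /map_j (piBDG_BD BDGDc) (ip_sym hH (kappa (D c)) psi) (Hk _ BDGDc).
rewrite -(gf_sym h0 h1 G (D c) (ks psi)) /form_b /graph_ip GDc => E.
rewrite /graph_ip (TB Dsub Dlin dw dGk) DGk Dw !hBl.
by rewrite addrACA -opprD E [X in X - _]addrC subrr.
Qed.

End Main.
Section Forms.
Variable R : realType.
Local Notation C := R[i].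
Local Notation cRe := (@complex.Re R).
Local Notation cIm := (@complex.Im R).
Variables (H0 H1 : lmodType C) (h0 : hilbert H0) (h1 : hilbert H1).
Variables (domG : H0 -> Prop) (G : H0 -> H1) (a : H1 -> H1) (m : H0 -> H0).

Lemma coer : coercive_op h1 a -> coercive_op h0 m ->
  coercive_form h0 h1 domG G (form_b h0 h1 G a m).
Proof.
move=> [mua [mua0 Ha]] [mum [mum0 Hm]].
have [ea ra0] := cgt0 mua0; have [em rm0] := cgt0 mum0.
exists (Num.min (cRe mua) (cRe mum))%:C%C; split; first by rewrite ltcR lt_min ra0 rm0.
move=> v dv.
have A := Ha (G v); have M := Hm v.
rewrite /hnorm sqrtCK ReRe (hxx h1) {1}ea -rmorphM lecR in A.
rewrite /hnorm sqrtCK ReRe (hxx h0) {1}em -rmorphM lecR in M.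
rewrite /graph_norm sqrtCK ReRe (fxx (gf_pos h0 h1 G)) -rmorphM lecR gf_nf /form_b ReD.
have g1 : Num.min (cRe mua) (cRe mum) <= cRe mua by rewrite ge_min lexx.
have g2 : Num.min (cRe mua) (cRe mum) <= cRe mum by rewrite ge_min lexx orbT.
have n0 := hnf_ge0 h0 v; have n1 := hnf_ge0 h1 (G v).
move: A M g1 g2 n0 n1.
set mi := Num.min _ _; set ra := cRe mua; set rm := cRe mum.
set p := nfm _ v; set q := nfm _ (G v); set X := cRe _; set Y := cRe _.
move=> A M g1 g2 n0 n1.
have h3 : 0 <= (ra - mi) * q by apply: mulr_ge0 => //; rewrite subr_ge0.
have h4 : 0 <= (rm - mi) * p by apply: mulr_ge0 => //; rewrite subr_ge0.
nra.
Qed.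

Lemma bnd_R (V : lmodType C) (h : hilbert V) (f : V -> V) : bounded_op h h f ->
  exists K : R, 0 <= K /\ forall x, nfm (ip h) (f x) <= K * nfm (ip h) x.
Proof.
move=> [c hc]; exists ((cRe c) ^+ 2); split; first exact: sqr_ge0.
move=> x; exact: (bound_conv (h_pos h (f x)) (h_pos h x) (hc x)).
Qed.

Lemma cont : bounded_op h1 h1 a -> bounded_op h0 h0 m ->
  continuous_form h0 h1 domG G (form_b h0 h1 G a m).
Proof.
move=> /bnd_R [Ka [Ka0 Ha]] /bnd_R [Km [Km0 Hm]].
exists (2 * (Ka + Km + 1))%:C%C => u v du dv.
have Nu0 := gf_nf_ge0 h0 h1 G u; have Nv0 := gf_nf_ge0 h0 h1 G v.
rewrite /graph_norm !(fxx (gf_pos h0 h1 G)) !sqrtC_R // normc_def -!rmorphM lecR.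
set z := form_b _ _ _ _ _ u v.
have X0 : 0 <= cRe z ^+ 2 + cIm z ^+ 2 by apply: addr_ge0; apply: sqr_ge0.
apply: sq_le; last first.
  apply: mulr_ge0; [apply: mulr_ge0; [|exact: sqrtr_ge0] | exact: sqrtr_ge0]; lra.
rewrite sqr_sqrtr // !exprMn !sqr_sqrtr //.
rewrite /z /form_b ReD ImD !gf_nf.
have a1 := hCS_Re h1 (a (G u)) (G v); have a2 := hCS_Im h1 (a (G u)) (G v).
have m1 := hCS_Re h0 (m u) v; have m2 := hCS_Im h0 (m u) v.
have ba := Ha (G u); have bm := Hm u.
have p0 := hnf_ge0 h0 u; have p1 := hnf_ge0 h1 (G u).
have q0 := hnf_ge0 h0 v; have q1 := hnf_ge0 h1 (G v).
have r1 := hnf_ge0 h1 (a (G u)); have r0 := hnf_ge0 h0 (m u).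
move: a1 a2 m1 m2 ba bm p0 p1 q0 q1 r1 r0.
set A1 := cRe (ip h1 _ _); set B1 := cIm (ip h1 _ _); set A0 := cRe (ip h0 _ _); set B0 := cIm (ip h0 _ _).
set P0 := nfm _ u; set P1 := nfm _ (G u); set Q0 := nfm _ v; set Q1 := nfm _ (G v).
set S1 := nfm _ (a _); set S0 := nfm _ (m _).
move=> a1 a2 m1 m2 ba bm p0 p1 q0 q1 r1 r0.
have s1 : (A1 + A0) ^+ 2 + (B1 + B0) ^+ 2 <= 2 * (A1 ^+ 2 + B1 ^+ 2) + 2 * (A0 ^+ 2 + B0 ^+ 2).
  have := sqr_ge0 (A1 - A0); have := sqr_ge0 (B1 - B0); nra.
have t1 : S1 * Q1 <= Ka * P1 * Q1 by apply: ler_wpM2r.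
have t0 : S0 * Q0 <= Km * P0 * Q0 by apply: ler_wpM2r.
have u1 : Ka * P1 * Q1 <= Ka * ((P0 + P1) * (Q0 + Q1)).
  rewrite -mulrA; apply: ler_wpM2l => //; apply: ler_pM => //; lra.
have u0 : Km * P0 * Q0 <= Km * ((P0 + P1) * (Q0 + Q1)).
  rewrite -mulrA; apply: ler_wpM2l => //; apply: ler_pM => //; lra.
have W0 : 0 <= (P0 + P1) * (Q0 + Q1) by apply: mulr_ge0; lra.
move: u1 u0 W0; set W := (P0 + P1) * (Q0 + Q1) => u1 u0 W0.
have fin : 4 * (Ka + Km) * W <= (2 * (Ka + Km + 1)) ^+ 2 * W.
  apply: ler_wpM2r => //; have := sqr_ge0 (Ka + Km); nra.
rewrite -/W -mulrA.
move: fin; rewrite -mulrA => fin.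
apply: (le_trans s1); rewrite -exprMn; apply: le_trans fin; lra.
Qed.
End Forms.

Unset Implicit Arguments.

Theorem proposition3p6 (R : realType)
  (H0 H1 H : lmodType R[i])
  (h0 : hilbert H0) (h1 : hilbert H1) (hH : hilbert H)
  (domG : H0 -> Prop) (G : H0 -> H1) (domD : H1 -> Prop) (D : H1 -> H0)
  (G_dd : densely_defined h0 domG G) (G_closed : closed_op h0 h1 domG G)
  (D_dd : densely_defined h1 domD D) (D_closed : closed_op h1 h0 domD D)
  (GD : minus_adj_sub h0 h1 domG G domD D)
  (kappa : H0 -> H)
  (kappa_lin : linear_on (BDG h0 h1 domG G domD D) kappa)
  (kappa_bdd : exists c : R[i], forall u, BDG h0 h1 domG G domD D u ->
      hnorm hH (kappa u) <= c * graph_norm h0 h1 G u)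
  (kappa_inj : forall u v, BDG h0 h1 domG G domD D u ->
      BDG h0 h1 domG G domD D v -> kappa u = kappa v -> u = v)
  (kappa_dense : dense hH (fun phi => exists u,
      BDG h0 h1 domG G domD D u /\ kappa u = phi))
  (a : {linear H1 -> H1}) (a_bdd : bounded_op h1 h1 a) (a_coer : coercive_op h1 a)
  (m : {linear H0 -> H0}) (m_bdd : bounded_op h0 h0 m) (m_coer : coercive_op h0 m) :
  coercive_form h0 h1 domG G (form_b h0 h1 G a m) /\
  continuous_form h0 h1 domG G (form_b h0 h1 G a m) /\
  forall phi psi : H,
    DtN_H h0 h1 hH domG G domD D kappa a m phi psi <->
    assoc_op hH domG (form_b h0 h1 G a m) (map_j h0 h1 domG G domD D kappa) phi psi.
Proof.
have [Gsub [Glin _]] := G_dd; have [Dsub [Dlin _]] := D_dd.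
split; first exact: coer.
split; first exact: cont.
move=> phi psi; split.
  exact: (fwd Gsub Glin G_closed Dsub Dlin D_closed GD kappa_lin kappa_bdd).
exact: (bwd Gsub Glin G_closed Dsub Dlin D_closed GD kappa_lin kappa_bdd).
Qed.
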